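(* Let $G$ be the automorphism group of $(\mathbb{Q},<)$. If $f \in G$ has infinitely many non-trivial orbitals, then $f$ has a non-identity restriction $g \in G$ which can be written as $g = g_1 g_2$ with $g_1, g_2 \in G$, where $g_1$ is an orbital of $g$ (in the group-element sense defined in the context) and $g$ is conjugate to $g_2$ in $G$.
   Context: For $f \in G$, an orbital of $f$ is an equivalence class of $\mathbb{Q}$ under the relation $a \sim b$ iff there are integers $m,n$ with $f^m a \le b \le f^n a$; an orbital is non-trivial if it has more than one point (equivalently, $f$ moves its points). The support of $f$ is the set of points moved by $f$. A bump is a non-identity element of $G$ having exactly one non-trivial orbital. An element $g \in G$ is a restriction of $f$ if the support of $g$ is contained in the support of $f$ and $g$ agrees with $f$ on the support of $g$. An element $g_1 \in G$ is said to be an orbital of $g$ if $g_1$ is a bump whose support is contained in that of $g$ and $g_1$ agrees with $g$ on its support. Elements $x,y$ are conjugate in $G$ if $y = h x h^{-1}$ for some $h \in G$. *)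

(* Defs.v *)
From HB Require Import structures.
From mathcomp Require Import all_boot all_order all_algebra.
From mathcomp Require Import boolp classical_sets cardinality.
Set Implicit Arguments. Unset Strict Implicit. Unset Printing Implicit Defensive.
Import Order.TTheory GRing.Theory Num.Theory.
Local Open Scope ring_scope.
Local Open Scope classical_set_scope.

Record aut : Type := Aut {
  autf :> rat -> rat;
  autinv : rat -> rat;
  autK : cancel autf autinv;
  autVK : cancel autinv autf;
  aut_mono : {mono autf : x y / x < y}
}.

Definition apow (f : aut) (m : int) : rat -> rat :=
  match m with
  | Posz n => iter n (autf f)
  | Negz n => iter n.+1 (autinv f)
  end.

Definition orb_rel (f : aut) (a b : rat) : Prop :=
  exists m n : int, apow f m a <= b /\ b <= apow f n a.

Definition orbital_of (f : aut) (a : rat) : set rat := [set b | orb_rel f a b].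

Definition orbitals (f : aut) : set (set rat) :=
  [set C | exists a, C = orbital_of f a].

Definition nontrivial (C : set rat) : Prop :=
  exists x y, C x /\ C y /\ x <> y.

Definition nontrivial_orbitals (f : aut) : set (set rat) :=
  [set C | orbitals f C /\ nontrivial C].

Definition supp (f : aut) : set rat := [set x | f x <> x].

Definition is_identity (f : aut) : Prop := forall x, f x = x.

Definition bump (f : aut) : Prop :=
  ~ is_identity f /\
  exists C, nontrivial_orbitals f C /\
            forall D, nontrivial_orbitals f D -> D = C.

Definition restriction (g f : aut) : Prop :=
  supp g `<=` supp f /\ forall x, supp g x -> g x = f x.

Definition orbital_elt (g1 g : aut) : Prop :=
  bump g1 /\ supp g1 `<=` supp g /\ forall x, supp g1 x -> g1 x = g x.

Definition conjugate (x y : aut) : Prop :=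
  exists h : aut, forall q, y q = h (x (autinv h q)).

(* Main.v *)
Require Import Defs.
From HB Require Import structures.
From mathcomp Require Import all_boot all_order all_algebra.
From mathcomp Require Import boolp classical_sets cardinality.
From mathcomp Require Import zify lra.
Import Order.TTheory GRing.Theory Num.Theory.
Local Open Scope ring_scope.
Local Open Scope classical_set_scope.
Set Implicit Arguments. Unset Strict Implicit. Unset Printing Implicit Defensive.

Section Apow.
Variable f : aut.

Lemma invK x : f (autinv f x) = x. Proof. exact: autVK. Qed.
Lemma Kinv x : autinv f (f x) = x. Proof. exact: autK. Qed.

Lemma inv_lt x y : (autinv f x < autinv f y) = (x < y).
Proof. by rewrite -(aut_mono f) !invK. Qed.

Lemma f_le x y : (f x <= f y) = (x <= y).
Proof. by rewrite !le_eqVlt aut_mono (can_eq (autK f)). Qed.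

Lemma apow0 x : apow f 0 x = x. Proof. by []. Qed.

Lemma apowS m x : apow f (m + 1) x = f (apow f m x).
Proof.
case: m => [n|n].
  have -> : (Posz n + 1 = Posz n.+1)%R by lia.
  by [].
case: n => [|n].
  by rewrite /= invK.
have -> : (Negz n.+1 + 1 = Negz n)%R by rewrite !NegzE; lia.
by rewrite /= invK.
Qed.

Lemma apowP m x : apow f (m - 1) x = autinv f (apow f m x).
Proof. by rewrite -[in RHS](subrK 1 m) apowS Kinv. Qed.

Lemma apowD m n x : apow f (m + n) x = apow f m (apow f n x).
Proof.
elim/int_rec: m => [|k IH|k IH]; first by rewrite add0r.
  have -> : ((k.+1)%:Z + n = (k%:Z + n) + 1) by lia.
  have -> : ((k.+1)%:Z = k%:Z + 1) by lia.
  by rewrite !apowS IH.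
have -> : (- (k.+1)%:Z + n = (- k%:Z + n) - 1) by lia.
rewrite apowP IH.
have -> : (- (k.+1)%:Z = (- k%:Z) - 1) by lia.
by rewrite apowP.
Qed.

Lemma apowN m x : apow f (- m) (apow f m x) = x.
Proof. by rewrite -apowD addNr. Qed.
Lemma apowNK m x : apow f m (apow f (- m) x) = x.
Proof. by rewrite -apowD addrN. Qed.

Lemma apow1 x : apow f 1 x = f x. Proof. by []. Qed.
Lemma apowN1 x : apow f (-1) x = autinv f x. Proof. by []. Qed.

Lemma apow_lt m x y : (apow f m x < apow f m y) = (x < y).
Proof.
elim/int_rec: m => [|k IH|k IH]; first by [].
  have -> : ((k.+1)%:Z = k%:Z + 1) by lia.
  by rewrite !apowS aut_mono.
have -> : (- (k.+1)%:Z = (- k%:Z) - 1) by lia.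
by rewrite !apowP inv_lt.
Qed.

Lemma apow_le m x y : (apow f m x <= apow f m y) = (x <= y).
Proof.
rewrite !le_eqVlt apow_lt; congr (_ || _).
apply/eqP/eqP => [h|->//]; by rewrite -(apowN m x) h apowN.
Qed.

Lemma apow_inj m : injective (apow f m).
Proof. by move=> x y h; rewrite -(apowN m x) h apowN. Qed.

End Apow.

Section Orb.
Variable f : aut.

Lemma orb_refl a : orb_rel f a a.
Proof. by exists 0, 0. Qed.

Lemma orb_sym a b : orb_rel f a b -> orb_rel f b a.
Proof.
case=> m [n [h1 h2]]; exists (- n), (- m); split.
  by rewrite -(apow_le f n) apowNK.
by rewrite -(apow_le f m) apowNK.
Qed.

Lemma orb_trans a b c : orb_rel f a b -> orb_rel f b c -> orb_rel f a c.
Proof.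
case=> m [n [h1 h2]] [p [q [h3 h4]]]; exists (p + m), (q + n); split.
  by rewrite apowD; apply: le_trans h3; rewrite apow_le.
by rewrite apowD; apply: le_trans h4 _; rewrite apow_le.
Qed.

Lemma orb_apow x k : orb_rel f x (apow f k x).
Proof. by exists k, k. Qed.

Lemma orb_f x : orb_rel f x (f x).
Proof. exact: (orb_apow x 1). Qed.

Lemma orb_finv x : orb_rel f x (autinv f x).
Proof. exact: (orb_apow x (-1)). Qed.

Lemma orb_convex a x y z : orb_rel f a x -> orb_rel f a z -> x <= y -> y <= z ->
  orb_rel f a y.
Proof.
case=> m [n [h1 h2]] [p [q [h3 h4]]] hxy hyz; exists m, q; split.
  exact: le_trans hxy.
exact: le_trans h4.
Qed.

Lemma apow_fix a m : f a = a -> apow f m a = a.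
Proof.
move=> h; elim/int_rec: m => [//|k IH|k IH].
  have -> : ((k.+1)%:Z = k%:Z + 1) by lia.
  by rewrite apowS IH.
have -> : (- (k.+1)%:Z = (- k%:Z) - 1) by lia.
by rewrite apowP IH -{1}h Kinv.
Qed.

Lemma orb_fixed a b : f a = a -> orb_rel f a b -> b = a.
Proof.
move=> h [m [n [h1 h2]]]; rewrite !apow_fix // in h1 h2.
by apply/eqP; rewrite eq_le h1 h2.
Qed.

Lemma orbital_eq a b : orb_rel f a b -> orbital_of f a = orbital_of f b.
Proof.
move=> h; rewrite /orbital_of; apply/funext => x /=; apply/propext; split.
  by move=> h2; apply: orb_trans (orb_sym h) h2.
by move=> h2; apply: orb_trans h h2.
Qed.

Definition below (O : set rat) x := forall y, O y -> x < y.
Definition above (O : set rat) x := forall y, O y -> y < x.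

Lemma orb_tri a x : orb_rel f a x \/ below (orbital_of f a) x \/ above (orbital_of f a) x.
Proof.
case: (pselect (orb_rel f a x)) => hx; first by left.
right; case: (pselect (below (orbital_of f a) x)) => hb; first by left.
right => z hz.
have [y hy hyx] : exists2 y, orbital_of f a y & y <= x.
  apply: contra_notP hb => hn y hy; rewrite ltNge; apply/negP => hyx; apply: hn; by exists y.
rewrite ltNge; apply/negP => hxz; apply: hx; exact: orb_convex hy hz hyx hxz.
Qed.

Lemma orb_sep a b : a < b -> ~ orb_rel f a b ->
  forall x y, orb_rel f a x -> orb_rel f b y -> x < y.
Proof.
move=> hab hn x y hx hy.
have hb : above (orbital_of f a) b.
  case: (orb_tri a b) => [//|[h|//]].
  by have := h a (orb_refl a); rewrite ltNge (ltW hab).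
have hy' : ~ orb_rel f a y.
  by move=> h; apply: hn; apply: orb_trans h (orb_sym hy).
case: (orb_tri a y) => [//|[h|h]]; last exact: h.
exfalso; apply: hn; apply: orb_sym.
exact: orb_convex hy (orb_refl b) (ltW (h a (orb_refl a))) (ltW hab).
Qed.

End Orb.

Section Zseq.
Variable s : int -> rat.
Hypothesis hs : forall n, s n < s (n + 1).

Lemma zs_lt m n : (m < n)%R -> s m < s n.
Proof.
move=> h.
have [d ->] : exists d : nat, n = m + (d.+1)%:Z.
  case E: (n - m - 1) => [d|d]; first by exists d; lia.
  lia.
elim: d => [|d IH]; first by apply: hs.
apply: lt_trans IH _.
have -> : (m + (d.+2)%:Z = (m + (d.+1)%:Z) + 1) by lia.
exact: hs.
Qed.

Lemma zs_le m n : (m <= n)%R -> s m <= s n.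
Proof.
rewrite le_eqVlt => /orP[/eqP->//|h]; exact: ltW (zs_lt h).
Qed.

Lemma zs_mono m n : (s m < s n) = (m < n)%R.
Proof.
apply/idP/idP; last exact: zs_lt.
move=> h; rewrite ltNge; apply/negP => h2.
by have := zs_le h2; rewrite leNgt h.
Qed.

Lemma zs_locate m k x : s m <= x -> x < s k ->
  exists n, s n <= x /\ x < s (n + 1).
Proof.
move=> h1 h2.
have [d E] : exists d : nat, k = m + d%:Z.
  case E: (k - m) => [d|d]; first by exists d; lia.
  have : (k <= m)%R by lia.
  by move/zs_le => h3; have := le_lt_trans h1 h2; rewrite ltNge h3.
subst k.
elim: d m h1 h2 => [|d IH] m h1 h2.
  by rewrite addr0 in h2; have := le_lt_trans h1 h2; rewrite ltxx.
case: (ltP x (s (m + 1))) => h3; first by exists m.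
apply: (IH (m + 1)) => //.
by have -> : (m + 1 + d%:Z = m + (d.+1)%:Z) by lia.
Qed.

Lemma zs_uniq n n' x : s n <= x -> x < s (n + 1) -> s n' <= x -> x < s (n' + 1) ->
  n = n'.
Proof.
move=> h1 h2 h3 h4.
case: (ltgtP n n') => // h.
  have : (n + 1 <= n')%R by lia.
  by move/zs_le => h5; have := le_lt_trans (le_trans h5 h3) h2; rewrite ltxx.
have : (n' + 1 <= n)%R by lia.
by move/zs_le => h5; have := le_lt_trans (le_trans h5 h1) h4; rewrite ltxx.
Qed.

End Zseq.

Section Up.
Variable f : aut.

Lemma apow_up a m : a < f a -> apow f m a < apow f (m + 1) a.
Proof. by move=> h; rewrite apowD apow_lt. Qed.

Lemma orb_up a x : a < f a ->
  orb_rel f a x <-> exists n, apow f n a <= x /\ x < apow f (n + 1) a.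
Proof.
move=> h; split.
  case=> m [n [h1 h2]].
  apply: (@zs_locate (fun k => apow f k a) (fun k => apow_up k h) m (n + 1) x h1).
  exact: le_lt_trans h2 (apow_up n h).
by case=> n [h1 h2]; exists n, (n + 1); split => //; exact: ltW.
Qed.

Lemma up_all a x : a < f a -> orb_rel f a x -> x < f x.
Proof.
move=> h /(orb_up _ h) [n [h1 h2]].
apply: lt_le_trans h2 _.
by rewrite apowS f_le.
Qed.

Lemma nontriv_moved a : nontrivial (orbital_of f a) <-> f a <> a.
Proof.
split.
  case=> x [y [hx [hy hxy]]] hf; apply: hxy.
  by rewrite (orb_fixed hf hx) (orb_fixed hf hy).
move=> h; exists a, (f a); split; first exact: orb_refl.
by split; [exact: orb_f | move=> e; apply: h; rewrite -e].
Qed.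

End Up.

Definition invA (f : aut) : aut :=
  Aut (autVK f) (autK f) (fun x y => inv_lt f x y).

Lemma apow_invA f m x : apow (invA f) m x = apow f (- m) x.
Proof.
elim/int_rec: m => [//|k IH|k IH].
  have -> : ((k.+1)%:Z = k%:Z + 1) by lia.
  by rewrite apowS IH opprD apowP.
have -> : (- (k.+1)%:Z = (- k%:Z) - 1) by lia.
by rewrite apowP IH opprB opprK addrC apowS.
Qed.

Lemma orb_invA f a b : orb_rel (invA f) a b <-> orb_rel f a b.
Proof.
split; case=> m [n [h1 h2]].
  by exists (- m), (- n); rewrite -!apow_invA.
by exists (- m), (- n); rewrite !apow_invA !opprK.
Qed.

Lemma orbital_invA f a : orbital_of (invA f) a = orbital_of f a.
Proof. by apply/funext => x; apply/propext; exact: orb_invA. Qed.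

Lemma down_invA (f : aut) a : f a < a -> a < invA f a.
Proof. by move=> h; rewrite -(inv_lt f) Kinv in h. Qed.

Record piso (C D : rat -> Prop) := PIso {
  pf : rat -> rat; pg : rat -> rat;
  pf_in : forall x, C x -> D (pf x);
  pg_in : forall y, D y -> C (pg y);
  pfK : forall x, C x -> pg (pf x) = x;
  pgK : forall y, D y -> pf (pg y) = y;
  pf_lt : forall x y, C x -> C y -> x < y -> pf x < pf y }.

Lemma pg_lt C D (F : piso C D) y y' : D y -> D y' -> y < y' -> pg F y < pg F y'.
Proof.
move=> hy hy' h; rewrite ltNge le_eqVlt; apply/negP => /orP[/eqP e|h2].
  by move: h; rewrite -(pgK F hy) -(pgK F hy') e ltxx.
have := pf_lt F (pg_in F hy') (pg_in F hy) h2.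
by rewrite !pgK // ltNge (ltW h).
Qed.

Lemma pf_mono C D (F : piso C D) x y : C x -> C y -> (pf F x < pf F y) = (x < y).
Proof.
move=> hx hy; apply/idP/idP; last exact: pf_lt.
move=> h; have := pg_lt F (pf_in F hx) (pf_in F hy) h; by rewrite !pfK.
Qed.

Definition piso_aut (F : piso setT setT) : aut :=
  Aut (fun x => pfK F (I : setT x)) (fun y => pgK F (I : setT y))
      (fun x y => pf_mono F (I : setT x) (I : setT y)).

Lemma piso_autE F x : piso_aut F x = pf F x. Proof. by []. Qed.

Definition piso_id C : piso C C :=
  @PIso C C id id (fun x h => h) (fun x h => h) (fun x _ => erefl) (fun x _ => erefl)
   (fun x y _ _ h => h).

Section Glue.
Variables (I : Type) (D E : I -> rat -> Prop) (F : forall i, piso (D i) (E i)).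
Hypothesis Ddisj : forall i j x, D i x -> D j x -> i = j.
Hypothesis Edisj : forall i j x, E i x -> E j x -> i = j.
Hypothesis ord : forall i j x y, i <> j -> D i x -> D j y -> x < y ->
  forall x' y', E i x' -> E j y' -> x' < y'.

Definition DU x := exists i, D i x.
Definition EU x := exists i, E i x.

Definition glue_f x :=
  match pselect (exists i, D i x) with
  | left h => pf (F (projT1 (cid h))) x
  | right _ => x end.
Definition glue_g y :=
  match pselect (exists i, E i y) with
  | left h => pg (F (projT1 (cid h))) y
  | right _ => y end.

Lemma glue_fE i x : D i x -> glue_f x = pf (F i) x.
Proof.
move=> hx; rewrite /glue_f; case: pselect => [h|h]; last by exfalso; apply: h; exists i.
case: (cid h) => j hj /=; by have e := Ddisj hj hx; subst j.
Qed.

Lemma glue_gE i y : E i y -> glue_g y = pg (F i) y.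
Proof.
move=> hy; rewrite /glue_g; case: pselect => [h|h]; last by exfalso; apply: h; exists i.
case: (cid h) => j hj /=; by have e := Edisj hj hy; subst j.
Qed.

Definition glue : piso DU EU.
refine (@PIso DU EU glue_f glue_g _ _ _ _ _).
- by move=> x [i hx]; exists i; rewrite (glue_fE hx); apply: pf_in.
- by move=> y [i hy]; exists i; rewrite (glue_gE hy); apply: pg_in.
- move=> x [i hx]; rewrite (glue_fE hx) (glue_gE (pf_in (F i) hx)); exact: pfK.
- move=> y [i hy]; rewrite (glue_gE hy) (glue_fE (pg_in (F i) hy)); exact: pgK.
- move=> x y [i hx] [j hy] hxy; rewrite (glue_fE hx) (glue_fE hy).
  case: (pselect (i = j)) => [e|ne].
    subst j; exact: pf_lt.
  exact: (ord ne hx hy hxy (pf_in (F i) hx) (pf_in (F j) hy)).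
Defined.

Lemma glueE i x : D i x -> pf glue x = pf (F i) x.
Proof. exact: glue_fE. Qed.

End Glue.

Definition piso_cast C D C' D' (hC : forall x, C' x <-> C x) (hD : forall x, D' x <-> D x)
  (F : piso C D) : piso C' D'.
refine (@PIso C' D' (pf F) (pg F) _ _ _ _ _).
- by move=> x /hC h; apply/hD; apply: pf_in.
- by move=> x /hD h; apply/hC; apply: pg_in.
- by move=> x /hC h; apply: pfK.
- by move=> x /hD h; apply: pgK.
- by move=> x y /hC h1 /hC h2; apply: pf_lt.
Defined.

Section Affine.
Variables p q p' q' : rat.
Hypothesis hpq : p < q.
Hypothesis hpq' : p' < q'.

Definition aff_r := (q' - p') / (q - p).
Lemma aff_r_gt0 : 0 < aff_r.
Proof. by rewrite /aff_r divr_gt0 // subr_gt0. Qed.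
Definition aff_f x := p' + (x - p) * aff_r.
Definition aff_g y := p + (y - p') / aff_r.

Lemma aff_fg y : aff_f (aff_g y) = y.
Proof.
have h := aff_r_gt0; rewrite /aff_f /aff_g.
by rewrite addrAC subrr add0r mulrVK ?unitfE ?gt_eqF // addrC subrK.
Qed.
Lemma aff_gf x : aff_g (aff_f x) = x.
Proof.
have h := aff_r_gt0; rewrite /aff_f /aff_g.
by rewrite addrAC subrr add0r mulfK ?gt_eqF // addrC subrK.
Qed.

Lemma aff_f_lt x y : x < y -> aff_f x < aff_f y.
Proof.
have h := aff_r_gt0; move=> hxy; rewrite /aff_f ltrD2l ltr_pM2r //; lra.
Qed.

Lemma aff_fq : aff_f q = q'.
Proof.
rewrite /aff_f /aff_r mulrC divfK; first by lra.
by rewrite subr_eq0 gt_eqF.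
Qed.
Lemma aff_fp : aff_f p = p'.
Proof. by rewrite /aff_f subrr mul0r addr0. Qed.

Lemma aff_g_lt x y : x < y -> aff_g x < aff_g y.
Proof.
move=> hxy; rewrite ltNge le_eqVlt; apply/negP => /orP[/eqP e|h2].
  have e2 : y = x by rewrite -(aff_fg x) -(aff_fg y) e.
  by move: hxy; rewrite e2 ltxx.
by have := aff_f_lt h2; rewrite !aff_fg ltNge (ltW hxy).
Qed.

Lemma aff_f_le x y : x <= y -> aff_f x <= aff_f y.
Proof. rewrite le_eqVlt => /orP[/eqP->//|h]; exact: ltW (aff_f_lt h). Qed.
Lemma aff_g_le x y : x <= y -> aff_g x <= aff_g y.
Proof. rewrite le_eqVlt => /orP[/eqP->//|h]; exact: ltW (aff_g_lt h). Qed.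
Lemma aff_gq : aff_g q' = q. Proof. by rewrite -aff_fq aff_gf. Qed.
Lemma aff_gp : aff_g p' = p. Proof. by rewrite -aff_fp aff_gf. Qed.

Definition aff_piso : piso (fun x => p <= x < q) (fun y => p' <= y < q').
refine (@PIso _ _ aff_f aff_g _ _ (fun x _ => aff_gf x) (fun y _ => aff_fg y) (fun x y _ _ => @aff_f_lt x y)).
- move=> x /andP[h1 h2]; apply/andP; split.
    by rewrite -aff_fp; apply: aff_f_le.
  by rewrite -aff_fq; apply: aff_f_lt.
- move=> y /andP[h1 h2]; apply/andP; split.
    by rewrite -aff_gp; apply: aff_g_le.
  by rewrite -aff_gq; apply: aff_g_lt.
Defined.
End Affine.

Lemma ord_of_rank (I : Type) (D E : I -> rat -> Prop) (lt : I -> I -> Prop) :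
  (forall i j, i <> j -> lt i j \/ lt j i) ->
  (forall i j x y, lt i j -> D i x -> D j y -> x < y) ->
  (forall i j x y, lt i j -> E i x -> E j y -> x < y) ->
  forall i j x y, i <> j -> D i x -> D j y -> x < y ->
  forall x' y', E i x' -> E j y' -> x' < y'.
Proof.
move=> tot hD hE i j x y ne hx hy hxy x' y' hx' hy'.
case: (tot i j ne) => h; first exact: hE h hx' hy'.
by have := hD _ _ _ _ h hy hx; rewrite ltNge (ltW hxy).
Qed.

Section ZChain.
Variables s s' : int -> rat.
Hypothesis hs : forall n, s n < s (n + 1).
Hypothesis hs' : forall n, s' n < s' (n + 1).
Variable F : forall n, piso (fun x => s n <= x < s (n + 1)) (fun y => s' n <= y < s' (n + 1)).

Lemma zc_disj (t : int -> rat) (ht : forall n, t n < t (n + 1)) i j x :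
  t i <= x < t (i + 1) -> t j <= x < t (j + 1) -> i = j.
Proof. move=> /andP[h1 h2] /andP[h3 h4]; exact: (zs_uniq ht h1 h2 h3 h4). Qed.

Lemma zc_ord (t : int -> rat) (ht : forall n, t n < t (n + 1)) i j x y :
  (i < j)%R -> t i <= x < t (i + 1) -> t j <= y < t (j + 1) -> x < y.
Proof.
move=> hij /andP[h1 h2] /andP[h3 h4].
apply: lt_le_trans h2 (le_trans _ h3); apply: zs_le => //; lia.
Qed.

Lemma int_tot (i j : int) : i <> j -> (i < j)%R \/ (j < i)%R.
Proof. lia. Qed.

Definition zchain := glue F (zc_disj hs) (zc_disj hs')
  (ord_of_rank int_tot (zc_ord hs) (zc_ord hs')).
End ZChain.

Definition convex (C : rat -> Prop) :=
  forall x y z, C x -> C z -> x <= y -> y <= z -> C y.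

Section Chain.
Variable C : rat -> Prop.
Hypothesis Cconv : convex C.
Variable c : rat.
Hypothesis Cc : C c.
Hypothesis nomax : forall x, C x -> exists y, C y /\ x < y.
Hypothesis nomin : forall x, C x -> exists y, C y /\ y < x.

Definition enum_q (n : nat) : rat := odflt 0 (unpickle n).
Lemma enum_qP x : enum_q (pickle x) = x.
Proof. by rewrite /enum_q pickleK. Qed.

Definition nxt x := match pselect (exists y, C y /\ x < y) with
  | left h => proj1_sig (cid h) | right _ => x end.
Definition prv x := match pselect (exists y, C y /\ y < x) with
  | left h => proj1_sig (cid h) | right _ => x end.

Lemma nxtP x : C x -> C (nxt x) /\ x < nxt x.
Proof.
move=> hx; rewrite /nxt; case: pselect => [h|h]; last by exfalso; apply: h; apply: nomax.
by case: (cid h).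
Qed.
Lemma prvP x : C x -> C (prv x) /\ prv x < x.
Proof.
move=> hx; rewrite /prv; case: pselect => [h|h]; last by exfalso; apply: h; apply: nomin.
by case: (cid h).
Qed.

Definition tup x k := if pselect (C (enum_q k)) then (if x < enum_q k then enum_q k else x) else x.
Definition tdn x k := if pselect (C (enum_q k)) then (if enum_q k < x then enum_q k else x) else x.

Fixpoint up (k : nat) : rat := if k is k'.+1 then nxt (tup (up k') k') else c.
Fixpoint dn (k : nat) : rat := if k is k'.+1 then prv (tdn (dn k') k') else c.

Lemma tupP x k : C x -> C (tup x k) /\ x <= tup x k /\ (C (enum_q k) -> enum_q k <= tup x k).
Proof.
move=> hx; rewrite /tup; case: pselect => h; last by split => //; split => //.
case: ifP => h2; first by split => //; split => //; exact: ltW.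
by split => //; split => //; rewrite leNgt h2.
Qed.
Lemma tdnP x k : C x -> C (tdn x k) /\ tdn x k <= x /\ (C (enum_q k) -> tdn x k <= enum_q k).
Proof.
move=> hx; rewrite /tdn; case: pselect => h; last by split => //; split => //.
case: ifP => h2; first by split => //; split => //; exact: ltW.
by split => //; split => //; rewrite leNgt h2.
Qed.

Lemma upP k : C (up k) /\ up k < up k.+1 /\ (C (enum_q k) -> enum_q k < up k.+1).
Proof.
elim: k => [|k [IH _]] /=.
  have [h1 [h2 h3]] := tupP 0 Cc; have [h4 h5] := nxtP h1.
  by split => //; split; [exact: le_lt_trans h5 | move=> /h3 h; exact: le_lt_trans h5].
have [h1 [h2 h3]] := tupP k.+1 (proj1 (nxtP (proj1 (tupP k IH)))).
have [h4 h5] := nxtP h1.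
split; first exact: (proj1 (nxtP (proj1 (tupP k IH)))).
by split; [exact: le_lt_trans h5 | move=> /h3 h; exact: le_lt_trans h5].
Qed.

Lemma dnP k : C (dn k) /\ dn k.+1 < dn k /\ (C (enum_q k) -> dn k.+1 < enum_q k).
Proof.
elim: k => [|k [IH _]] /=.
  have [h1 [h2 h3]] := tdnP 0 Cc; have [h4 h5] := prvP h1.
  by split => //; split; [exact: lt_le_trans h2 | move=> /h3 h; exact: lt_le_trans h].
have [h1 [h2 h3]] := tdnP k.+1 (proj1 (prvP (proj1 (tdnP k IH)))).
have [h4 h5] := prvP h1.
split; first exact: (proj1 (prvP (proj1 (tdnP k IH)))).
by split; [exact: lt_le_trans h2 | move=> /h3 h; exact: lt_le_trans h].
Qed.

Definition zs (n : int) : rat := match n with Posz k => up k | Negz k => dn k.+1 end.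

Lemma zs_inc n : zs n < zs (n + 1).
Proof.
case: n => [k|[|k]].
- have -> : (Posz k + 1 = Posz k.+1)%R by lia.
  exact: (proj1 (proj2 (upP k))).
- have -> : (Negz 0 + 1 = Posz 0)%R by lia.
  exact: (proj1 (proj2 (dnP 0))).
- have -> : (Negz k.+1 + 1 = Negz k)%R by rewrite !NegzE; lia.
  exact: (proj1 (proj2 (dnP k.+1))).
Qed.

Lemma zs_in n : C (zs n).
Proof. case: n => [k|k]; [exact: (proj1 (upP k)) | exact: (proj1 (dnP k.+1))]. Qed.

Lemma zs_cover x : C x <-> exists n, zs n <= x < zs (n + 1).
Proof.
split.
  move=> hx.
  have h1 : zs (Negz (pickle x)) < x.
    by have := proj2 (proj2 (dnP (pickle x))); rewrite enum_qP; apply.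
  have h2 : x < zs (Posz (pickle x).+1).
    by have := proj2 (proj2 (upP (pickle x))); rewrite enum_qP; apply.
  have [n [h3 h4]] := zs_locate zs_inc (ltW h1) h2.
  by exists n; rewrite h3 h4.
case=> n /andP[h1 h2]; exact: Cconv (zs_in n) (zs_in (n + 1)) h1 (ltW h2).
Qed.

End Chain.

Definition inh_pick (T : Type) (h : inhabited T) : T :=
  proj1_sig (cid (match h with inhabits t => ex_intro (fun _ : T => True) t I end)).

Lemma core_iso (C C' : rat -> Prop) :
  convex C -> (exists c, C c) -> (forall x, C x -> exists y, C y /\ x < y) ->
  (forall x, C x -> exists y, C y /\ y < x) ->
  convex C' -> (exists c, C' c) -> (forall x, C' x -> exists y, C' y /\ x < y) ->
  (forall x, C' x -> exists y, C' y /\ y < x) ->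
  inhabited (piso C C').
Proof.
move=> cv [c hc] h1 h2 cv' [c' hc'] h1' h2'.
pose s := zs C c. pose s' := zs C' c'.
have hs := zs_inc hc h1 h2. have hs' := zs_inc hc' h1' h2'.
pose F := fun n => aff_piso (hs n) (hs' n).
constructor.
refine (@piso_cast _ _ C C' _ _ (zchain hs hs' F)).
- move=> x; rewrite (zs_cover cv hc h1 h2 x); by [].
- move=> x; rewrite (zs_cover cv' hc' h1' h2' x); by [].
Qed.

Definition ismin (C : rat -> Prop) x := C x /\ forall y, C y -> x <= y.
Definition ismax (C : rat -> Prop) x := C x /\ forall y, C y -> y <= x.
Definition core (C : rat -> Prop) x := C x /\ (exists y, C y /\ y < x) /\ (exists z, C z /\ x < z).
Definition hasmin C := exists x, ismin C x.
Definition hasmax C := exists x, ismax C x.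

Section Sing.
Variables S S' : rat -> Prop.
Hypothesis hS : forall x y, S x -> S y -> x = y.
Hypothesis hS' : forall x y, S' x -> S' y -> x = y.
Hypothesis hSS : (exists x, S x) <-> (exists y, S' y).

Definition sing_f (x : rat) := match pselect (exists y, S' y) with
  | left h => proj1_sig (cid h) | right _ => x end.
Definition sing_g (y : rat) := match pselect (exists x, S x) with
  | left h => proj1_sig (cid h) | right _ => y end.

Lemma sing_f_in x : S x -> S' (sing_f x).
Proof.
move=> hx; rewrite /sing_f; case: pselect => [h|h]; first by case: (cid h).
by exfalso; apply: h; apply/hSS; exists x.
Qed.
Lemma sing_g_in y : S' y -> S (sing_g y).
Proof.
move=> hy; rewrite /sing_g; case: pselect => [h|h]; first by case: (cid h).
by exfalso; apply: h; apply/hSS; exists y.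
Qed.

Definition sing_iso : piso S S'.
refine (@PIso S S' sing_f sing_g sing_f_in sing_g_in _ _ _).
- move=> x hx; apply: hS (sing_g_in (sing_f_in hx)) hx.
- move=> y hy; apply: hS' (sing_f_in (sing_g_in hy)) hy.
- by move=> x y hx hy; rewrite (hS hx hy) ltxx.
Defined.
End Sing.

Section ConvIso.
Variables C C' : rat -> Prop.
Hypothesis cv : convex C.
Hypothesis cv' : convex C'.
Hypothesis ne : exists x, core C x.
Hypothesis ne' : exists x, core C' x.
Hypothesis hmin : hasmin C <-> hasmin C'.
Hypothesis hmax : hasmax C <-> hasmax C'.

Lemma core_convex (K : rat -> Prop) : convex K -> convex (core K).
Proof.
move=> k x y z [hx [[a [ha hax]] _]] [hz [_ [b [hb hzb]]]] hxy hyz.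
split; first exact: k hx hz hxy hyz.
split; [exists a; split => //; exact: lt_le_trans hxy | exists b; split => //; exact: le_lt_trans hzb].
Qed.

Lemma core_nomax (K : rat -> Prop) : convex K -> forall x, core K x -> exists y, core K y /\ x < y.
Proof.
move=> k x [hx [hy [z [hz hxz]]]].
have h1 : x < (x + z) / 2 by lra.
have h2 : (x + z) / 2 < z by lra.
exists ((x + z) / 2); split => //; split; first exact: k hx hz (ltW h1) (ltW h2).
by split; [exists x | exists z].
Qed.

Lemma core_nomin (K : rat -> Prop) : convex K -> forall x, core K x -> exists y, core K y /\ y < x.
Proof.
move=> k x [hx [[z [hz hzx]] hy]].
have h1 : z < (z + x) / 2 by lra.
have h2 : (z + x) / 2 < x by lra.
exists ((z + x) / 2); split => //; split; first exact: k hz hx (ltW h1) (ltW h2).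
by split; [exists z | exists x].
Qed.

Definition cpiece (K : rat -> Prop) (i : nat) : rat -> Prop :=
  match i with 0 => ismin K | 1 => core K | 2 => ismax K | _ => fun _ => False end.

Lemma min_uniq (K : rat -> Prop) x y : ismin K x -> ismin K y -> x = y.
Proof. move=> [h1 h2] [h3 h4]; apply/eqP; rewrite eq_le h2 // h4 //. Qed.
Lemma max_uniq (K : rat -> Prop) x y : ismax K x -> ismax K y -> x = y.
Proof. move=> [h1 h2] [h3 h4]; apply/eqP; rewrite eq_le h2 // h4 //. Qed.

Lemma cpiece_lt (K : rat -> Prop) (nK : exists x, core K x) i j x y :
  (i < j)%N -> cpiece K i x -> cpiece K j y -> x < y.
Proof.
case: i => [|[|[|i]]] //; case: j => [|[|[|j]]] //= _.
- move=> [hx hm] [hy [[a [ha hay]] _]]; exact: le_lt_trans (hm a ha) hay.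
- move=> [hx hm] [hy hM]; case: nK => c [hc [[a [ha hac]] _]].
  exact: le_lt_trans (hm a ha) (lt_le_trans hac (hM c hc)).
- move=> [hx [_ [b [hb hxb]]]] [hy hM]; exact: lt_le_trans hxb (hM b hb).
Qed.

Lemma cpiece_disj (K : rat -> Prop) (nK : exists x, core K x) i j x :
  cpiece K i x -> cpiece K j x -> i = j.
Proof.
move=> hi hj; case: (ltngtP i j) => // h.
  by have := cpiece_lt nK h hi hj; rewrite ltxx.
by have := cpiece_lt nK h hj hi; rewrite ltxx.
Qed.

Lemma cpiece_cover (K : rat -> Prop) x : K x <-> exists i, cpiece K i x.
Proof.
split; last by case=> [[|[|[|i]]]] //= [].
move=> hx.
case: (pselect (forall y, K y -> x <= y)) => h1; first by exists 0.
case: (pselect (forall y, K y -> y <= x)) => h2; first by exists 2.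
exists 1; split => //; split.
  apply: contra_notP h1 => hn y hy; rewrite leNgt; apply/negP => hyx; apply: hn; by exists y.
apply: contra_notP h2 => hn y hy; rewrite leNgt; apply/negP => hyx; apply: hn; by exists y.
Qed.

Definition cpiece_iso (i : nat) : piso (cpiece C i) (cpiece C' i) :=
  match i return piso (cpiece C i) (cpiece C' i) with
  | 0 => sing_iso (@min_uniq C) (@min_uniq C') hmin
  | 1 => inh_pick (core_iso (core_convex cv) ne (core_nomax cv) (core_nomin cv)
                     (core_convex cv') ne' (core_nomax cv') (core_nomin cv'))
  | 2 => sing_iso (@max_uniq C) (@max_uniq C') hmax
  | _.+3 => piso_id _
  end.

Lemma nat_tot (i j : nat) : i <> j -> (i < j)%N \/ (j < i)%N.
Proof. lia. Qed.

Definition conv_iso : piso C C' :=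
  piso_cast (fun x => cpiece_cover C x) (fun x => cpiece_cover C' x)
    (glue cpiece_iso (cpiece_disj ne) (cpiece_disj ne')
      (ord_of_rank nat_tot (cpiece_lt ne) (cpiece_lt ne'))).

End ConvIso.

Lemma eqb_iff (b1 b2 : bool) : b1 = b2 -> (b1 <-> b2). Proof. by move=> ->. Qed.
Lemma eqP_iff (P Q : Prop) : P = Q -> (P <-> Q). Proof. by move=> ->. Qed.

Lemma ex_andb (P Q : int -> bool) : (exists n, P n && Q n) <-> (exists n, P n /\ Q n).
Proof. by split; case=> n h; exists n; apply/andP. Qed.

Section Conj.
Variable f : aut.

Definition piso_conj D E (F : piso D E) (n : int) :
  piso (fun x => D (apow f (- n) x)) (fun y => E (apow f (- n) y)).
refine (@PIso _ _ (fun x => apow f n (pf F (apow f (- n) x)))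
                  (fun y => apow f n (pg F (apow f (- n) y))) _ _ _ _ _).
- by move=> x hx /=; rewrite apowN; apply: pf_in.
- by move=> y hy /=; rewrite apowN; apply: pg_in.
- by move=> x hx /=; rewrite apowN pfK // apowNK.
- by move=> y hy /=; rewrite apowN pgK // apowNK.
- move=> x y hx hy hxy /=; rewrite apow_lt; apply: pf_lt => //; by rewrite apow_lt.
Defined.

Variables a a' : rat.
Hypothesis ha : a < f a.
Hypothesis ha' : a' < f a'.

Let s n := apow f n a.
Let s' n := apow f n a'.
Let hs n : s n < s (n + 1) := apow_up n ha.
Let hs' n : s' n < s' (n + 1) := apow_up n ha'.

Let F0 := aff_piso (hs 0) (hs' 0).

Lemma piece_shift (b : rat) n x : (apow f n b <= x < apow f (n + 1) b) =
  (apow f 0 b <= apow f (- n) x < apow f (0 + 1) b).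
Proof.
rewrite -(apow_le f (- n)) -(apow_lt f (- n)) -!apowD addNr add0r.
by have -> : (- n + (n + 1) = 1)%R by lia.
Qed.

Definition Fn (n : int) : piso (fun x => s n <= x < s (n + 1)) (fun y => s' n <= y < s' (n + 1)) :=
  piso_cast (fun x => eqb_iff (piece_shift a n x)) (fun y => eqb_iff (piece_shift a' n y))
    (piso_conj F0 n).

Definition orb_iso : piso (orbital_of f a) (orbital_of f a') :=
  piso_cast (fun x => orb_up x ha) (fun y => orb_up y ha')
    (piso_cast (fun x => iff_sym (ex_andb (fun n => s n <= x) (fun n => x < s (n + 1))))
   (fun y => iff_sym (ex_andb (fun n => s' n <= y) (fun n => y < s' (n + 1)))) (zchain hs hs' Fn)).

Lemma orb_iso_comm x : orbital_of f a x -> pf orb_iso (f x) = f (pf orb_iso x).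
Proof.
move=> /(orb_up _ ha) [n [h1 h2]].
have hx : s n <= x < s (n + 1) by rewrite h1 h2.
have hfx : s (n + 1) <= f x < s (n + 1 + 1).
  by apply/andP; split; [rewrite /s apowS f_le | rewrite /s apowS aut_mono].
rewrite /orb_iso /= /zchain (glue_fE Fn (zc_disj hs) hx) (glue_fE Fn (zc_disj hs) hfx) /=.
have -> : apow f (- (n + 1)) (f x) = apow f (- n) x.
  by rewrite -apow1 -apowD; congr apow; lia.
by rewrite apowS.
Qed.
End Conj.

Lemma orb_conj (f : aut) a a' :
  (a < f a /\ a' < f a') \/ (f a < a /\ f a' < a') ->
  exists F : piso (orbital_of f a) (orbital_of f a'),
    forall x, orbital_of f a x -> pf F (f x) = f (pf F x).
Proof.
case=> [[h1 h2]|[h1 h2]].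
  by exists (orb_iso h1 h2); apply: orb_iso_comm.
have h1' := down_invA h1; have h2' := down_invA h2.
have e := orbital_invA f.
exists (piso_cast (fun x => eqP_iff (f_equal (fun P => P x) (esym (e a))))
                  (fun x => eqP_iff (f_equal (fun P => P x) (esym (e a')))) (orb_iso h1' h2')).
move=> x hx /=.
have hfx : orbital_of (invA f) a (f x) by rewrite e; exact: orb_trans hx (orb_f f x).
have := orb_iso_comm h1' h2' hfx; rewrite /= Kinv => ->.
by rewrite invK.
Qed.

Lemma inc_mono (g : rat -> rat) : (forall x y, x < y -> g x < g y) ->
  forall x y, (g x < g y) = (x < y).
Proof.
move=> h x y; apply/idP/idP; last exact: h.
move=> hg; rewrite ltNge le_eqVlt; apply/negP => /orP[/eqP e|h2].
  by move: hg; rewrite e ltxx.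
by have := h _ _ h2; rewrite ltNge (ltW hg).
Qed.

Section Restr.
Variable f : aut.
Variable S : rat -> Prop.
Hypothesis Sclosed : forall x y, S x -> orb_rel f x y -> S y.

Definition rf x := if pselect (S x) then f x else x.
Definition rg x := if pselect (S x) then autinv f x else x.

Lemma rf_in x : S x -> rf x = f x. Proof. by rewrite /rf; case: pselect. Qed.
Lemma rf_out x : ~ S x -> rf x = x. Proof. by rewrite /rf; case: pselect. Qed.
Lemma rg_in x : S x -> rg x = autinv f x. Proof. by rewrite /rg; case: pselect. Qed.
Lemma rg_out x : ~ S x -> rg x = x. Proof. by rewrite /rg; case: pselect. Qed.

Lemma rfK : cancel rf rg.
Proof.
move=> x; case: (pselect (S x)) => h.
  by rewrite rf_in // rg_in ?Kinv //; apply: Sclosed h (orb_f f x).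
by rewrite rf_out // rg_out.
Qed.
Lemma rgK : cancel rg rf.
Proof.
move=> x; case: (pselect (S x)) => h.
  by rewrite rg_in // rf_in ?invK //; apply: Sclosed h (orb_finv f x).
by rewrite rg_out // rf_out.
Qed.

Lemma rf_inc x y : x < y -> rf x < rf y.
Proof.
move=> hxy.
case: (pselect (S x)) => hx; case: (pselect (S y)) => hy;
  rewrite ?(rf_in hx) ?(rf_out hx) ?(rf_in hy) ?(rf_out hy).
- by rewrite aut_mono.
- have hn : ~ orb_rel f x y by move=> h; apply: hy; exact: Sclosed hx h.
  exact: (orb_sep hxy hn (orb_f f x) (orb_refl f y)).
- have hn : ~ orb_rel f x y by move=> h; apply: hx; exact: Sclosed hy (orb_sym h).
  exact: (orb_sep hxy hn (orb_refl f x) (orb_f f y)).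
- exact: hxy.
Qed.

Definition restr : aut := Aut rfK rgK (inc_mono rf_inc).

Lemma restr_in x : S x -> restr x = f x.
Proof. exact: rf_in. Qed.
Lemma restr_out x : ~ S x -> restr x = x.
Proof. exact: rf_out. Qed.

Lemma apow_restr_in m x : S x -> apow restr m x = apow f m x.
Proof.
move=> hx; elim/int_rec: m => [//|k IH|k IH].
  have -> : ((k.+1)%:Z = k%:Z + 1) by lia.
  by rewrite !apowS IH restr_in //; apply: Sclosed hx (orb_apow f x k).
have -> : (- (k.+1)%:Z = (- k%:Z) - 1) by lia.
rewrite !apowP IH /= rg_in //.
exact: Sclosed hx (orb_apow f x _).
Qed.

Lemma orb_restr_in a b : S a -> (orb_rel restr a b <-> orb_rel f a b).
Proof.
move=> ha; split; case=> m [n [h1 h2]]; exists m, n;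
  by rewrite ?apow_restr_in // in h1 h2 *.
Qed.

Lemma orb_restr_out a b : ~ S a -> orb_rel restr a b -> b = a.
Proof. move=> ha; apply: orb_fixed; exact: restr_out. Qed.

End Restr.

Definition concl (f : aut) := exists g : aut,
    restriction g f /\ ~ is_identity g /\
    exists g1 g2 : aut,
      (forall q, g q = g1 (g2 q)) /\ orbital_elt g1 g /\ conjugate g2 g.

Section Neg.

Lemma negK (f : aut) : cancel (fun x => - f (- x)) (fun x => - autinv f (- x)).
Proof. by move=> x; rewrite opprK Kinv opprK. Qed.
Lemma negVK (f : aut) : cancel (fun x => - autinv f (- x)) (fun x => - f (- x)).
Proof. by move=> x; rewrite opprK invK opprK. Qed.
Lemma neg_mono (f : aut) : {mono (fun x => - f (- x)) : x y / x < y}.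
Proof. by move=> x y; rewrite ltrN2 aut_mono ltrN2. Qed.

Definition negA (f : aut) : aut := Aut (negK f) (negVK f) (@neg_mono f).

Lemma negAE f x : negA f x = - f (- x). Proof. by []. Qed.

Lemma apow_negA f m x : apow (negA f) m x = - apow f m (- x).
Proof.
elim/int_rec: m => [|k IH|k IH]; first by rewrite /= opprK.
  have -> : ((k.+1)%:Z = k%:Z + 1) by lia.
  by rewrite !apowS IH negAE opprK.
have -> : (- (k.+1)%:Z = (- k%:Z) - 1) by lia.
by rewrite !apowP IH /= opprK.
Qed.

Lemma orb_negA f a b : orb_rel (negA f) a b <-> orb_rel f (- a) (- b).
Proof.
split; case=> m [n [h1 h2]]; exists n, m; rewrite ?apow_negA in h1 h2 *.
  by split; [rewrite -lerN2 opprK | rewrite -lerN2 opprK].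
by split; [rewrite -lerN2 opprK | rewrite -lerN2 opprK].
Qed.

Definition negS (C : set rat) : set rat := fun x => C (- x).

Lemma negSK C : negS (negS C) = C.
Proof. by apply/funext => x; rewrite /negS opprK. Qed.

Lemma orbital_negA f a : orbital_of (negA f) a = negS (orbital_of f (- a)).
Proof. by apply/funext => x; apply/propext; rewrite /negS /orbital_of /=; exact: orb_negA. Qed.

Lemma nontriv_negS C : nontrivial C -> nontrivial (negS C).
Proof.
case=> x [y [hx [hy hxy]]]; exists (- x), (- y); rewrite /negS !opprK; split => //; split => //.
by move/oppr_inj.
Qed.

Lemma nto_negA f D : nontrivial_orbitals (negA f) D -> nontrivial_orbitals f (negS D).
Proof.
case=> [[a ->] hn]; split; first by exists (- a); rewrite orbital_negA negSK.
by have := nontriv_negS hn; rewrite orbital_negA negSK.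
Qed.

Lemma nto_negA' f D : nontrivial_orbitals f D -> nontrivial_orbitals (negA f) (negS D).
Proof.
case=> [[a ->] hn]; split; first by exists (- a); rewrite orbital_negA opprK.
exact: nontriv_negS.
Qed.

Lemma supp_negA g x : supp (negA g) x <-> supp g (- x).
Proof.
rewrite /supp /=; split => h e; apply: h.
  by rewrite e opprK.
by apply: oppr_inj; rewrite opprK e.
Qed.

Lemma bump_negA g : Defs.bump g -> Defs.bump (negA g).
Proof.
case=> hid [C [hC hu]]; split.
  move=> h; apply: hid => x; have := h (- x); rewrite negAE opprK => e.
  by rewrite -[LHS]opprK e opprK.
exists (negS C); split; first exact: nto_negA'.
move=> D /nto_negA /hu <-; by rewrite negSK.
Qed.

Lemma restriction_negA g f : restriction g (negA f) -> restriction (negA g) f.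
Proof.
case=> h1 h2; split.
  move=> x /supp_negA /h1 /supp_negA; by rewrite opprK.
move=> x /supp_negA hx; rewrite negAE h2 // negAE !opprK //.
Qed.

Lemma orbital_elt_negA g1 g : orbital_elt g1 g -> orbital_elt (negA g1) (negA g).
Proof.
case=> hb [h1 h2]; split; first exact: bump_negA.
split.
  by move=> x /supp_negA /h1 /supp_negA.
by move=> x /supp_negA hx; rewrite !negAE h2.
Qed.

Lemma conjugate_negA g2 g : conjugate g2 g -> conjugate (negA g2) (negA g).
Proof.
case=> h hh; exists (negA h) => q; rewrite /= hh !opprK.
by [].
Qed.

Lemma concl_negA f : concl (negA f) -> concl f.
Proof.
case=> g [hr [hid [g1 [g2 [hc [ho hcj]]]]]].
exists (negA g); split; first exact: restriction_negA.
split.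
  move=> h; apply: hid => x; have := h (- x); rewrite negAE opprK => e.
  by rewrite -[LHS]opprK e opprK.
exists (negA g1), (negA g2); split.
  by move=> q; rewrite !negAE hc opprK.
split; [exact: orbital_elt_negA | exact: conjugate_negA].
Qed.

End Neg.

Lemma inj_seq T (A : set T) : infinite_set A ->
  exists f : nat -> T, (forall n, A (f n)) /\ injective f.
Proof.
move=> /infiniteP /card_leP /injfunPex [g hg hi].
exists (fun n => proj1_sig (g (exist _ n (mem_set (I : setT n))))); split.
  by move=> n; apply: set_mem; apply: (proj2_sig (g _)).
move=> x y e.
have := hi (exist _ x (mem_set (I : setT x))) (exist _ y (mem_set (I : setT y))).
move=> /(_ (mem_set I) (mem_set I)) h.
have := h (val_inj e); by case.
Qed.

Lemma seq_build (P : nat -> Prop) (R : nat -> nat -> Prop) n0 : P n0 ->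
  (forall n, P n -> exists m, (n < m)%N /\ R n m /\ P m) ->
  exists s : nat -> nat, s 0%N = n0 /\ forall k, P (s k) /\ (s k < s k.+1)%N /\ R (s k) (s k.+1).
Proof.
move=> h0 hs.
pose step (x : {n | P n}) : {n | P n} :=
  let (m, hm) := cid (hs _ (proj2_sig x)) in exist P m (proj2 (proj2 hm)).
have stepP x : ((proj1_sig x) < proj1_sig (step x))%N /\ R (proj1_sig x) (proj1_sig (step x)).
  rewrite /step; case: (cid _) => m [h1 [h2 h3]] /=; by split.
pose fix sq (k : nat) : {n | P n} := if k is k'.+1 then step (sq k') else exist P n0 h0.
exists (fun k => proj1_sig (sq k)); split => // k /=; split; first exact: proj2_sig.
exact: stepP.
Qed.

Lemma inc_lt (s : nat -> nat) : (forall k, (s k < s k.+1)%N) -> forall i j, (i < j)%N -> (s i < s j)%N.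
Proof.
move=> h i j hij; elim: j hij => [//|j IH] hij.
rewrite ltnS leq_eqVlt in hij; case/orP: hij => [/eqP ->|h2]; first exact: h.
exact: ltn_trans (IH h2) (h j).
Qed.

Lemma pigeon (c : nat -> bool) : exists b (s : nat -> nat),
  (forall k, (s k < s k.+1)%N) /\ forall k, c (s k) = b.
Proof.
case: (pselect (forall N, exists n, (N <= n)%N /\ c n)) => h.
  have [n0 [_ h0]] := h 0%N.
  have [s [_ hs]] := @seq_build (fun n => c n) (fun _ _ => True) n0 h0 (fun n _ =>
    let: ex_intro m (conj h1 h2) := h n.+1 in ex_intro _ m (conj h1 (conj I h2))).
  exists true, s; split => k; [exact: (proj1 (proj2 (hs k))) | exact: (proj1 (hs k))].
have [N hN] : exists N, forall n, (N <= n)%N -> c n = false.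
  apply: contra_notP h => hn N; apply: contra_notP hn => hn2; exists N => n hn.
  apply/negbTE/negP => hc; apply: hn2; by exists n.
exists false, (fun k => N + k)%N; split => k; first by rewrite addnS.
by apply: hN; rewrite leq_addr.
Qed.

Lemma ramsey (r : nat -> rat) : injective r -> exists s : nat -> nat,
  (forall k, (s k < s k.+1)%N) /\
  ((forall k, r (s k) < r (s k.+1)) \/ (forall k, r (s k.+1) < r (s k))).
Proof.
move=> hr.
pose peak n := forall m, (n < m)%N -> r m < r n.
case: (pselect (forall N, exists n, (N <= n)%N /\ peak n)) => h.
  have [n0 [_ h0]] := h 0%N.
  have [s [_ hs]] := @seq_build peak (fun _ _ => True) n0 h0 (fun n _ =>
    let: ex_intro m (conj h1 h2) := h n.+1 in ex_intro _ m (conj h1 (conj I h2))).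
  exists s; split => [k|]; first exact: (proj1 (proj2 (hs k))).
  by right => k; apply: (proj1 (hs k)); exact: (proj1 (proj2 (hs k))).
have [N hN] : exists N, forall n, (N <= n)%N -> ~ peak n.
  apply: contra_notP h => hn M; apply: contra_notP hn => hn2; exists M => n hn hp.
  apply: hn2; by exists n.
have step : forall n, (N <= n)%N -> exists m, (n < m)%N /\ r n < r m /\ (N <= m)%N.
  move=> n hn; have := hN n hn; move=> hp.
  have [m hm] : exists m, (n < m)%N /\ ~ (r m < r n).
    apply: contra_notP hp => hn2 m hm; apply: contra_notP hn2 => hn3; by exists m.
  case: hm => h1 h2; exists m; split => //; split; last exact: leq_trans hn (ltnW h1).
  rewrite lt_neqAle; apply/andP; split.
    by apply/eqP => e; move: h1; rewrite (hr _ _ e) ltnn.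
  by rewrite leNgt; apply/negP.
have [s [_ hs]] := @seq_build (fun n => (N <= n)%N) (fun n m => r n < r m) N (leqnn N) step.
exists s; split => [k|]; first exact: (proj1 (proj2 (hs k))).
by left => k; exact: (proj2 (proj2 (hs k))).
Qed.

Definition Hchain (f : aut) (a : nat -> rat) :=
  (forall n, a n < a n.+1) /\ (forall n, f (a n) <> a n) /\
  (forall n m, n <> m -> ~ orb_rel f (a n) (a m)).

Lemma get_chain f : infinite_set (nontrivial_orbitals f) ->
  exists a, Hchain f a \/ Hchain (negA f) a.
Proof.
move=> /inj_seq [O [hO hinj]].
pose r n := proj1_sig (cid (proj1 (hO n))).
have hr n : O n = orbital_of f (r n) by rewrite /r; case: cid.
have hmv n : f (r n) <> r n by apply/nontriv_moved; rewrite -hr; exact: (proj2 (hO n)).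
have hd n m : n <> m -> ~ orb_rel f (r n) (r m).
  by move=> ne e; apply: ne; apply: hinj; rewrite !hr; apply: orbital_eq.
have hri : injective r.
  move=> n m e; case: (pselect (n = m)) => // ne; exfalso; apply: (hd n m ne).
  rewrite e; apply: orb_refl.
have [s [hs hdir]] := ramsey hri.
have sinj : injective s.
  move=> i j e; case: (ltngtP i j) => // h.
    by have := inc_lt hs h; rewrite e ltnn.
  by have := inc_lt hs h; rewrite e ltnn.
case: hdir => hdir.
  exists (fun k => r (s k)); left; split => //; split => [n|n m ne]; first exact: hmv.
  by apply: hd => e; apply: ne; apply: sinj.
exists (fun k => - r (s k)); right; split; first by move=> n; rewrite ltrN2.
split => [n|n m ne]; first by rewrite negAE opprK => e; apply: (hmv (s n)); apply: oppr_inj.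
rewrite orb_negA !opprK; by apply: hd => e; apply: ne; apply: sinj.
Qed.

Definition ltopt (k l : option nat) : Prop :=
  match k, l with
  | Some k, Some l => (k < l)%N
  | Some _, None => True
  | _, _ => False end.

Lemma opt_tot k l : k <> l -> ltopt k l \/ ltopt l k.
Proof.
case: k => [k|]; case: l => [l|] //= ne; [|by left|by right].
have : k <> l by move=> e; apply: ne; rewrite e.
lia.
Qed.

Section Pieces.
Variable f : aut.
Variable e : nat -> rat.
Hypothesis he_inc : forall i, e i < e i.+1.
Hypothesis he_d : forall i j, i <> j -> ~ orb_rel f (e i) (e j).

Let O i := orbital_of f (e i).

Lemma e_lt i j : (i < j)%N -> e i < e j.
Proof.
move=> hij; elim: j hij => [//|j IH] hij.
rewrite ltnS leq_eqVlt in hij; case/orP: hij => [/eqP ->|h2]; first exact: he_inc.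
exact: lt_trans (IH h2) (he_inc j).
Qed.

Lemma O_lt i j x y : (i < j)%N -> O i x -> O j y -> x < y.
Proof.
move=> hij hx hy; apply: (orb_sep (e_lt hij)) hx hy.
by apply: he_d => eij; move: hij; rewrite eij ltnn.
Qed.

Lemma above_down i j x : (j <= i)%N -> above (O i) x -> above (O j) x.
Proof.
rewrite leq_eqVlt => /orP[/eqP ->//|h] ha y hy.
exact: lt_trans (O_lt h hy (orb_refl f (e i))) (ha _ (orb_refl f (e i))).
Qed.

Lemma below_up i j x : (i <= j)%N -> below (O i) x -> below (O j) x.
Proof.
rewrite leq_eqVlt => /orP[/eqP ->//|h] hb y hy.
exact: lt_trans (hb _ (orb_refl f (e i))) (O_lt h (orb_refl f (e i)) hy).
Qed.

Definition pc (k : option nat) (x : rat) : Prop :=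
  match k with
  | None => forall i, above (O i) x
  | Some k => (k = 0%N /\ below (O 0) x) \/
              (exists i, k = (2 * i).+1 /\ O i x) \/
              (exists i, k = (2 * i).+2 /\ above (O i) x /\ below (O i.+1) x)
  end.

Lemma pc_lev k x : pc (Some k) x ->
  (forall i, ((2 * i).+1 < k)%N -> above (O i) x) /\
  (forall i, (k < (2 * i).+1)%N -> below (O i) x) /\
  (forall i, k = (2 * i).+1 -> O i x).
Proof.
case=> [[-> hb]|[[j [-> hj]]|[j [-> [ha hb]]]]].
- split => //; split => [i _|i]; [exact: below_up hb | lia].
- split => [i hi y hy|]; first by apply: O_lt hy hj; lia.
  split => [i hi y hy|i hi]; first by apply: O_lt hj hy; lia.
  by have -> : i = j by lia.
- split => [i hi|]; first by apply: above_down ha; lia.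
  split => [i hi|i hi]; [by apply: below_up hb; lia | lia].
Qed.

Lemma pc_order k l x y : ltopt k l -> pc k x -> pc l y -> x < y.
Proof.
case: k => [k|] //; case: l => [l|] /= hkl hx hy.
  have [hx1 [hx2 hx3]] := pc_lev hx; have [hy1 [hy2 hy3]] := pc_lev hy.
  have [i [hk|hk]] : exists i, k = (2 * i)%N \/ k = (2 * i).+1.
    exists (k %/ 2)%N; lia.
    have hb : below (O i) x by apply: hx2; lia.
    have : ((2 * i).+1 = l \/ (2 * i).+1 < l)%N by lia.
    case=> h.
      by apply: hb; apply: hy3.
    exact: lt_trans (hb _ (orb_refl f (e i))) (hy1 i h _ (orb_refl f (e i))).
  have hxi : O i x by apply: hx3.
  by apply: (hy1 i) => //; lia.
have [hx1 [hx2 hx3]] := pc_lev hx.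
have hb : below (O k) x by apply: hx2; lia.
exact: lt_trans (hb _ (orb_refl f (e k))) (hy k _ (orb_refl f (e k))).
Qed.

Lemma pc_disj k l x : pc k x -> pc l x -> k = l.
Proof.
move=> hk hl; case: (pselect (k = l)) => // ne.
by case: (opt_tot ne) => h; [have := pc_order h hk hl | have := pc_order h hl hk]; rewrite ltxx.
Qed.

Lemma pc_odd i x : pc (Some (2 * i).+1) x <-> O i x.
Proof.
split; last by move=> h; right; left; exists i.
case=> [[h _]|[[j [h hj]]|[j [h _]]]]; [lia | by have -> : i = j by lia | lia].
Qed.

Lemma pc_zero x : pc (Some 0%N) x <-> below (O 0) x.
Proof.
split; last by move=> h; left.
case=> [[_ h]//|[[j [h _]]|[j [h _]]]]; lia.
Qed.

Lemma pc_even i x : pc (Some (2 * i).+2) x <-> above (O i) x /\ below (O i.+1) x.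
Proof.
split; last by move=> h; right; right; exists i.
case=> [[h _]|[[j [h _]]|[j [h hj]]]]; [lia | lia | by have -> : i = j by lia].
Qed.

Lemma pc_inO i k x : O i x -> pc k x -> k = Some (2 * i).+1.
Proof. by move=> h hk; apply: pc_disj hk _; apply/pc_odd. Qed.

Lemma pc_cover x : exists k, pc k x.
Proof.
case: (pselect (exists k, pc (Some k) x)) => [[k hk]|hn]; first by exists (Some k).
exists None => /=.
suff : forall n, forall j, (j < n)%N -> above (O j) x.
  by move=> h i; apply: (h i.+1).
elim=> [//|n IH] j hj.
rewrite ltnS leq_eqVlt in hj; case/orP: hj => [/eqP ->|h]; last exact: IH.
case: (orb_tri f (e n) x) => [hin|[hb|//]].
  by exfalso; apply: hn; exists (2 * n).+1; apply/pc_odd.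
exfalso; apply: hn; case: n IH hb => [|n] IH hb.
  by exists 0%N; apply/pc_zero.
by exists (2 * n).+2; apply/pc_even; split => //; apply: IH.
Qed.

End Pieces.

Lemma below_convex (O : set rat) : convex (below O).
Proof. move=> x y z hx hz hxy hyz w hw; exact: le_lt_trans hyz (hz w hw). Qed.

Lemma gap_convex (O O' : set rat) : convex (fun x => above O x /\ below O' x).
Proof.
move=> x y z [hx1 hx2] [hz1 hz2] hxy hyz; split => w hw.
  exact: lt_le_trans (hx1 w hw) hxy.
exact: le_lt_trans hyz (hz2 w hw).
Qed.

Lemma below_nomin (O : set rat) : ~ hasmin (below O).
Proof.
case=> m [hm hmin].
have h : below O (m - 1) by move=> y hy; have := hm y hy; lra.
by have := hmin _ h; lra.
Qed.

Lemma core_of_orb (f : aut) (C : rat -> Prop) p : f p <> p ->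
  (forall y, orb_rel f p y -> C y) -> core C p.
Proof.
move=> hp hC; split; first exact: hC (orb_refl f p).
have hf := hC _ (orb_f f p); have hi := hC _ (orb_finv f p).
case: (ltgtP p (f p)) => h; last by exfalso; apply: hp.
- split; last by exists (f p).
  exists (autinv f p); split => //; by rewrite -(inv_lt f) Kinv in h.
- split; first by exists (f p).
  exists (autinv f p); split => //; by rewrite -(inv_lt f) Kinv in h.
Qed.

Section GapFlags.
Variables O O' : set rat.
Let G := fun x => above O x /\ below O' x.
Variable w : rat.
Hypothesis hw : G w.

Lemma gap_min : hasmin G <-> hasmin (above O).
Proof.
split.
  case=> m [[hm1 hm2] hmin]; exists m; split => // x hx.
  case: (pselect (below O' x)) => hb; first by apply: hmin.
  have [y hy hyx] : exists2 y, O' y & y <= x.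
    apply: contra_notP hb => hn y hy; rewrite ltNge; apply/negP => h; apply: hn; by exists y.
  exact: ltW (lt_le_trans (hm2 y hy) hyx).
case=> m [hm hmin]; exists m; split.
  split => // y hy; exact: le_lt_trans (hmin _ (proj1 hw)) (proj2 hw y hy).
by move=> x [hx _]; apply: hmin.
Qed.

Lemma gap_max : hasmax G <-> hasmax (below O').
Proof.
split.
  case=> m [[hm1 hm2] hmax]; exists m; split => // x hx.
  case: (pselect (above O x)) => hb; first by apply: hmax.
  have [y hy hyx] : exists2 y, O y & x <= y.
    apply: contra_notP hb => hn y hy; rewrite ltNge; apply/negP => h; apply: hn; by exists y.
  exact: ltW (le_lt_trans hyx (hm1 y hy)).
case=> m [hm hmax]; exists m; split.
  split => // y hy; exact: lt_le_trans (proj1 hw y hy) (hmax _ (proj2 hw)).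
by move=> x [_ hx]; apply: hmax.
Qed.
End GapFlags.

Lemma Hchain_sub f a (s : nat -> nat) : Hchain f a -> (forall k, (s k < s k.+1)%N) ->
  Hchain f (fun k => a (s k)).
Proof.
case=> h1 [h2 h3] hs; split; first by move=> k; apply: e_lt.
split => [n|n m ne]; first exact: h2.
apply: h3 => e; apply: ne.
case: (ltngtP n m) => // h; by have := inc_lt hs h; rewrite e ltnn.
Qed.

Lemma uniform f a (P : rat -> Prop) : Hchain f a ->
  exists s : nat -> nat, (forall k, (s k < s k.+1)%N) /\
    forall n m, P (a (s n)) <-> P (a (s m)).
Proof.
move=> h.
have [b [s [hs hb]]] := pigeon (fun n => `[< P (a n) >]).
exists s; split => // n m.
have e1 := hb n; have e2 := hb m.
split => hp.
  have e3 : `[< P (a (s n)) >] = true by apply/asboolP.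
  by apply/asboolP; rewrite e2 -e1 e3.
have e3 : `[< P (a (s m)) >] = true by apply/asboolP.
by apply/asboolP; rewrite e1 -e2 e3.
Qed.

Section Main.
Variable f : aut.
Variable a : nat -> rat.
Hypothesis ha : Hchain f a.
Hypothesis u1 : forall n m, (a n < f (a n)) <-> (a m < f (a m)).
Hypothesis u2 : forall n m, hasmax (below (orbital_of f (a n))) <-> hasmax (below (orbital_of f (a m))).
Hypothesis u3 : forall n m, hasmin (above (orbital_of f (a n))) <-> hasmin (above (orbital_of f (a m))).

Let hinc := proj1 ha.
Let hmv := proj1 (proj2 ha).
Let hd := proj2 (proj2 ha).

Definition c i := a (2 * i).+1.
Definition e1 i := c i.+1.

Lemma c_inc i : c i < c i.+1.
Proof. rewrite /c; apply: (e_lt hinc); lia. Qed.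
Lemma c_d i j : i <> j -> ~ orb_rel f (c i) (c j).
Proof. by move=> ne; apply: hd; lia. Qed.
Lemma e1_inc i : e1 i < e1 i.+1.
Proof. exact: c_inc. Qed.
Lemma e1_d i j : i <> j -> ~ orb_rel f (e1 i) (e1 j).
Proof. by move=> ne; apply: c_d; lia. Qed.

Lemma Oa_lt n m x y : (n < m)%N -> orbital_of f (a n) x -> orbital_of f (a m) y -> x < y.
Proof. exact: (O_lt hinc hd). Qed.

Lemma c_dir i j : (c i < f (c i) /\ c j < f (c j)) \/ (f (c i) < c i /\ f (c j) < c j).
Proof.
have hm := @hmv (2 * i).+1; have hm2 := @hmv (2 * j).+1; rewrite /c.
case: (ltgtP (a (2 * i).+1) (f (a (2 * i).+1))) => h; last by exfalso; apply: hm; rewrite -h.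
  by left; split => //; apply/(u1 (2 * j).+1 (2 * i).+1).
right; split => //.
case: (ltgtP (a (2 * j).+1) (f (a (2 * j).+1))) => h2 //; last by exfalso; apply: hm2; rewrite -h2.
by have := (proj1 (u1 (2 * j).+1 (2 * i).+1) h2); rewrite ltNge (ltW h).
Qed.

Lemma Fex k : exists F : piso (pc f e1 k) (pc f c k),
  forall i x, k = Some (2 * i).+1 -> orbital_of f (e1 i) x -> pf F (f x) = f (pf F x).
Proof.
case: k => [k|]; last first.
  have h : forall x, pc f e1 None x <-> pc f c None x.
    move=> x; split => hx i /=.
      by apply: (above_down c_inc c_d (i := i.+1)) => //; apply: hx.
    exact: hx.
  by exists (piso_cast h (fun x => iff_refl _) (piso_id _)).
case: k => [|k].
  have cv1 := @below_convex (orbital_of f (c 1)).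
  have cv0 := @below_convex (orbital_of f (c 0)).
  have n1 : exists x, core (below (orbital_of f (c 1))) x.
    exists (a 2); apply: core_of_orb; first exact: hmv.
    move=> y hy z hz; apply: (Oa_lt (n := 2) (m := 3)) => //.
  have n0 : exists x, core (below (orbital_of f (c 0))) x.
    exists (a 0); apply: core_of_orb; first exact: hmv.
    move=> y hy z hz; apply: (Oa_lt (n := 0) (m := 1)) => //.
  have fmin : hasmin (below (orbital_of f (c 1))) <-> hasmin (below (orbital_of f (c 0))).
    by split => /below_nomin.
  have fmax := u2 3 1.
  exists (piso_cast (pc_zero f e1) (pc_zero f c) (conv_iso cv1 cv0 n1 n0 fmin fmax)).
  by move=> i x.
have [j [->|->]] : exists j, k = (2 * j)%N \/ k = (2 * j).+1 by exists (k %/ 2)%N; lia.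
  have [F0 hF0] := orb_conj (c_dir j.+1 j).
  exists (piso_cast (pc_odd f e1 j) (pc_odd f c j) F0).
  move=> i x [e] hx; have ei : i = j by lia.
  by subst i; apply: hF0.
set G1 := fun x => above (orbital_of f (c j.+1)) x /\ below (orbital_of f (c j.+2)) x.
set G0 := fun x => above (orbital_of f (c j)) x /\ below (orbital_of f (c j.+1)) x.
have cv1 : convex G1 by apply: gap_convex.
have cv0 : convex G0 by apply: gap_convex.
have c1 : core G1 (a (2 * j).+4).
  apply: core_of_orb; first exact: hmv.
  move=> y hy; split => z hz.
    rewrite /c in hz; apply: (Oa_lt _ hz hy); lia.
  rewrite /c in hz; apply: (Oa_lt _ hy hz); lia.
have c0 : core G0 (a (2 * j).+2).
  apply: core_of_orb; first exact: hmv.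
  move=> y hy; split => z hz.
    rewrite /c in hz; apply: (Oa_lt _ hz hy); lia.
  rewrite /c in hz; apply: (Oa_lt _ hy hz); lia.
have fmin : hasmin G1 <-> hasmin G0.
  exact: iff_trans (gap_min (proj1 c1)) (iff_trans (u3 _ _) (iff_sym (gap_min (proj1 c0)))).
have fmax : hasmax G1 <-> hasmax G0.
  exact: iff_trans (gap_max (proj1 c1)) (iff_trans (u2 _ _) (iff_sym (gap_max (proj1 c0)))).
exists (piso_cast (pc_even f e1 j) (pc_even f c j)
  (conv_iso cv1 cv0 (ex_intro _ _ c1) (ex_intro _ _ c0) fmin fmax)).
by move=> i x [e]; lia.
Qed.

Definition Fk k := proj1_sig (cid (Fex k)).
Lemma Fk_comm k i x : k = Some (2 * i).+1 -> orbital_of f (e1 i) x ->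
  pf (Fk k) (f x) = f (pf (Fk k) x).
Proof. rewrite /Fk; case: (cid _) => F hF /=; exact: hF. Qed.

Definition H0 := glue Fk (pc_disj e1_inc e1_d) (pc_disj c_inc c_d)
  (ord_of_rank opt_tot (pc_order e1_inc e1_d) (pc_order c_inc c_d)).

Lemma cover1 x : setT x <-> DU (pc f e1) x.
Proof. by split => // _; apply: pc_cover. Qed.
Lemma cover0 x : setT x <-> EU (pc f c) x.
Proof. by split => // _; apply: pc_cover. Qed.

Definition h := piso_aut (piso_cast cover1 cover0 H0).

Lemma hE k x : pc f e1 k x -> h x = pf (Fk k) x.
Proof. move=> hx; exact: (glue_fE Fk (pc_disj e1_inc e1_d) hx). Qed.

Lemma h_in k x : pc f e1 k x -> pc f c k (h x).
Proof. by move=> hx; rewrite (hE hx); apply: pf_in. Qed.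

Definition Sg x := exists i, orbital_of f (c i) x.
Definition S2 x := exists i, orbital_of f (c i.+1) x.
Definition S1 x := orbital_of f (c 0) x.

Lemma Sg_cl x y : Sg x -> orb_rel f x y -> Sg y.
Proof. by case=> i hi hxy; exists i; apply: orb_trans hi hxy. Qed.
Lemma S2_cl x y : S2 x -> orb_rel f x y -> S2 y.
Proof. by case=> i hi hxy; exists i; apply: orb_trans hi hxy. Qed.
Lemma S1_cl x y : S1 x -> orb_rel f x y -> S1 y.
Proof. by move=> hi hxy; apply: orb_trans hi hxy. Qed.

Definition g := restr Sg_cl.
Definition g1 := restr S1_cl.
Definition g2 := restr S2_cl.

Lemma c_disj i j x : orbital_of f (c i) x -> orbital_of f (c j) x -> i = j.
Proof.
move=> hi hj; case: (pselect (i = j)) => // ne; exfalso.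
by apply: (c_d ne); apply: orb_trans hi (orb_sym hj).
Qed.

Lemma key x : h (g2 x) = g (h x).
Proof.
have [k hk] := pc_cover f e1 x.
case: (pselect (S2 x)) => hs2.
  case: hs2 => i hi.
  have ek : k = Some (2 * i).+1 := pc_inO e1_inc e1_d hi hk.
  have hfx : orbital_of f (c i.+1) (f x) := orb_trans hi (orb_f f x).
  have hk' : pc f e1 k (f x) by rewrite ek; apply/pc_odd.
  rewrite /g2 restr_in; last by exists i.
  rewrite (hE hk') (Fk_comm ek hi) -(hE hk).
  have := h_in hk; rewrite ek => /pc_odd hhx.
  by rewrite /g restr_in //; exists i.
rewrite /g2 restr_out // /g restr_out //.
case=> j hj.
have ek : k = Some (2 * j).+1 := pc_inO c_inc c_d hj (h_in hk).
apply: hs2; exists j; apply/(pc_odd f e1); rewrite -ek //.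
Qed.

Lemma conj_g2 : conjugate g2 g.
Proof. by exists h => q; rewrite key invK. Qed.

Lemma restr_g : restriction g f.
Proof.
split.
  move=> x hx; case: (pselect (Sg x)) => hs; last by exfalso; apply: hx; rewrite /g restr_out.
  by move=> e; apply: hx; rewrite /g restr_in.
move=> x hx; case: (pselect (Sg x)) => hs; last by exfalso; apply: hx; rewrite /g restr_out.
by rewrite /g restr_in.
Qed.

Lemma c0_moved : f (c 0) <> c 0.
Proof. exact: hmv. Qed.

Lemma nid_g : ~ is_identity g.
Proof.
move=> hid; apply: c0_moved; have := hid (c 0); rewrite /g restr_in //.
by exists 0%N; apply: orb_refl.
Qed.

Lemma comp_g q : g q = g1 (g2 q).
Proof.
case: (pselect (Sg q)) => hs.
  case: hs => [[|j] hj].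
    have n2 : ~ S2 q by case=> i hi; have := c_disj hj hi.
    rewrite /g2 restr_out // /g1 restr_in // /g restr_in //; by exists 0%N.
  have hfq : orbital_of f (c j.+1) (f q) := orb_trans hj (orb_f f q).
  have n1 : ~ S1 (f q) by move=> h1; have := c_disj h1 hfq.
  rewrite /g2 restr_in; last by exists j.
  by rewrite /g1 restr_out // /g restr_in //; exists j.+1.
have n2 : ~ S2 q by case=> i hi; apply: hs; exists i.+1.
have n1 : ~ S1 q by move=> hi; apply: hs; exists 0%N.
by rewrite /g2 restr_out // /g1 restr_out // /g restr_out.
Qed.

Lemma orbelt : orbital_elt g1 g.
Proof.
split.
  split.
    move=> hid; apply: c0_moved; have := hid (c 0); rewrite /g1 restr_in //.
    exact: orb_refl.
  exists (orbital_of f (c 0)); split.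
    split.
      exists (c 0); apply/funext => y; apply/propext; rewrite /orbital_of /=.
      by symmetry; apply: orb_restr_in; apply: orb_refl.
    by apply/nontriv_moved; exact: c0_moved.
  move=> D [[p ->] hn].
  case: (pselect (S1 p)) => hp.
    have -> : orbital_of g1 p = orbital_of f p.
      by apply/funext => y; apply/propext; apply: orb_restr_in.
    by apply: orbital_eq; apply: orb_sym.
  exfalso; case: hn => x [y [hx [hy hxy]]]; apply: hxy.
  by rewrite (orb_restr_out hp hx) (orb_restr_out hp hy).
have key1 x : supp g1 x -> S1 x.
  by move=> hx; case: (pselect (S1 x)) => // hs; exfalso; apply: hx; rewrite /g1 restr_out.
have key2 x : S1 x -> g1 x = g x.
  by move=> hs; rewrite /g1 restr_in // /g restr_in //; exists 0%N.
split.
  move=> x hx; have hs := key1 x hx; have e := key2 x hs; move=> e2; apply: hx; by rewrite e.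
by move=> x hx; apply: key2; apply: key1.
Qed.

Lemma main_concl : concl f.
Proof.
exists g; split; first exact: restr_g.
split; first exact: nid_g.
exists g1, g2; split; first exact: comp_g.
split; [exact: orbelt | exact: conj_g2].
Qed.

End Main.

Lemma core_main f a : Hchain f a -> concl f.
Proof.
move=> ha.
have [s1 [hs1 hu1]] := uniform (fun x => x < f x) ha.
have ha1 := Hchain_sub ha hs1.
have [s2 [hs2 hu2]] := uniform (fun x => hasmax (below (orbital_of f x))) ha1.
have ha2 := Hchain_sub ha1 hs2.
have [s3 [hs3 hu3]] := uniform (fun x => hasmin (above (orbital_of f x))) ha2.
have ha3 := Hchain_sub ha2 hs3.
apply: (main_concl ha3).
- by move=> n m; apply: hu1.
- by move=> n m; apply: hu2.
- by move=> n m; apply: hu3.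
Qed.

Unset Implicit Arguments.
Theorem lemma2p1 (f : aut) :
  infinite_set (nontrivial_orbitals f) ->
  exists g : aut,
    restriction g f /\ ~ is_identity g /\
    exists g1 g2 : aut,
      (forall q, g q = g1 (g2 q)) /\ orbital_elt g1 g /\ conjugate g2 g.
Proof.
move=> hinf; have [a [h|h]] := get_chain hinf.
  exact: core_main h.
apply: concl_negA; exact: core_main h.
Qed.
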